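(* (Two-Tensor Lemma) The following always commutes: $\tau_{X,A,B,Y⅋(C\otimes D)⅋Z}\circ(1_{X⅋A}\otimes\tau_{B⅋Y,C,D,Z})=\tau_{X⅋(A\otimes B)⅋Y,C,D,Z}\circ(\tau_{X,A,B,Y⅋C}\otimes 1_{D⅋Z})$ as maps $(X⅋A)\otimes(B⅋Y⅋C)\otimes(D⅋Z)\to X⅋(A\otimes B)⅋Y⅋(C\otimes D)⅋Z$.
   Context: Write ⅋ for par. Let $\mathcal C$ be a $*$-autonomous category: symmetric monoidal $(\mathcal C,\otimes,\mathsf1)$ with contravariant $(-)^\perp$, $A^{\perp\perp}\cong A$, natural bijections (curryfication) $\mathrm{Hom}(A\otimes B^\perp,C)\cong\mathrm{Hom}(A,C⅋B)$ with $A⅋B=(B^\perp\otimes A^\perp)^\perp$; associativity isomorphisms are suppressed. Evaluations $\epsilon_B$ ($(C⅋B)\otimes B^\perp\to C$ and, via symmetry, $B^\perp\otimes(B⅋C)\to C$) are de-curryfications of identities. The internal tensor $\tau_{A,B,C,D}:(A⅋B)\otimes(C⅋D)\to A⅋(B\otimes C)⅋D$ is obtained by curryfying twice (left and right) the map $\epsilon_A\otimes\epsilon_D:A^\perp\otimes(A⅋B)\otimes(C⅋D)\otimes D^\perp\to B\otimes C$. *)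

(* Defs.v *)
(* A *-autonomous category is presented (Barr) as a symmetric monoidal closed
   category with a dualizing object [bot]: the canonical map
   d_A : A -> (A -o bot) -o bot is an isomorphism. *)

Record StarAut : Type := {
  Obj : Type;
  Hom : Obj -> Obj -> Type;
  idm : forall A, Hom A A;
  comp : forall A B C, Hom B C -> Hom A B -> Hom A C;
  comp_idl : forall A B (f : Hom A B), comp _ _ _ (idm B) f = f;
  comp_idr : forall A B (f : Hom A B), comp _ _ _ f (idm A) = f;
  comp_assoc : forall A B C D (f : Hom A B) (g : Hom B C) (h : Hom C D),
      comp _ _ _ h (comp _ _ _ g f) = comp _ _ _ (comp _ _ _ h g) f;
  tens : Obj -> Obj -> Obj;
  tensm : forall A A' B B', Hom A A' -> Hom B B' -> Hom (tens A B) (tens A' B');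
  tensm_id : forall A B, tensm _ _ _ _ (idm A) (idm B) = idm (tens A B);
  tensm_comp : forall A A' A'' B B' B'' (f : Hom A A') (f' : Hom A' A'')
      (g : Hom B B') (g' : Hom B' B''),
      tensm _ _ _ _ (comp _ _ _ f' f) (comp _ _ _ g' g)
      = comp _ _ _ (tensm _ _ _ _ f' g') (tensm _ _ _ _ f g);
  unit : Obj;
  assoc : forall A B C, Hom (tens (tens A B) C) (tens A (tens B C));
  assoc_inv : forall A B C, Hom (tens A (tens B C)) (tens (tens A B) C);
  assoc_iso1 : forall A B C, comp _ _ _ (assoc_inv A B C) (assoc A B C) = idm _;
  assoc_iso2 : forall A B C, comp _ _ _ (assoc A B C) (assoc_inv A B C) = idm _;
  assoc_nat : forall A A' B B' C C' (f : Hom A A') (g : Hom B B') (h : Hom C C'),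
      comp _ _ _ (assoc A' B' C') (tensm _ _ _ _ (tensm _ _ _ _ f g) h)
      = comp _ _ _ (tensm _ _ _ _ f (tensm _ _ _ _ g h)) (assoc A B C);
  lunit : forall A, Hom (tens unit A) A;
  lunit_inv : forall A, Hom A (tens unit A);
  lunit_iso1 : forall A, comp _ _ _ (lunit_inv A) (lunit A) = idm _;
  lunit_iso2 : forall A, comp _ _ _ (lunit A) (lunit_inv A) = idm _;
  lunit_nat : forall A A' (f : Hom A A'),
      comp _ _ _ (lunit A') (tensm _ _ _ _ (idm unit) f) = comp _ _ _ f (lunit A);
  runit : forall A, Hom (tens A unit) A;
  runit_inv : forall A, Hom A (tens A unit);
  runit_iso1 : forall A, comp _ _ _ (runit_inv A) (runit A) = idm _;
  runit_iso2 : forall A, comp _ _ _ (runit A) (runit_inv A) = idm _;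
  runit_nat : forall A A' (f : Hom A A'),
      comp _ _ _ (runit A') (tensm _ _ _ _ f (idm unit)) = comp _ _ _ f (runit A);
  sym : forall A B, Hom (tens A B) (tens B A);
  sym_inv : forall A B, comp _ _ _ (sym B A) (sym A B) = idm _;
  sym_nat : forall A A' B B' (f : Hom A A') (g : Hom B B'),
      comp _ _ _ (sym A' B') (tensm _ _ _ _ f g)
      = comp _ _ _ (tensm _ _ _ _ g f) (sym A B);
  pentagon : forall A B C D,
      comp _ _ _ (assoc A B (tens C D)) (assoc (tens A B) C D)
      = comp _ _ _ (tensm _ _ _ _ (idm A) (assoc B C D))
          (comp _ _ _ (assoc A (tens B C) D) (tensm _ _ _ _ (assoc A B C) (idm D)));
  triangle : forall A B,
      comp _ _ _ (tensm _ _ _ _ (idm A) (lunit B)) (assoc A unit B)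
      = tensm _ _ _ _ (runit A) (idm B);
  hexagon : forall A B C,
      comp _ _ _ (assoc B C A) (comp _ _ _ (sym A (tens B C)) (assoc A B C))
      = comp _ _ _ (tensm _ _ _ _ (idm B) (sym A C))
          (comp _ _ _ (assoc B A C) (tensm _ _ _ _ (sym A B) (idm C)));
  ihom : Obj -> Obj -> Obj;
  ev : forall B C, Hom (tens (ihom B C) B) C;
  lam : forall A B C, Hom (tens A B) C -> Hom A (ihom B C);
  ev_lam : forall A B C (g : Hom (tens A B) C),
      comp _ _ _ (ev B C) (tensm _ _ _ _ (lam A B C g) (idm B)) = g;
  lam_ev : forall A B C (h : Hom A (ihom B C)),
      lam A B C (comp _ _ _ (ev B C) (tensm _ _ _ _ h (idm B))) = h;
  (* dualizing object: the canonical d_A : A -> (A -o bot) -o bot is iso,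
     with inverse dd A *)
  bot : Obj;
  dd : forall A, Hom (ihom (ihom A bot) bot) A;
  dd_iso1 : forall A,
      comp _ _ _ (dd A) (lam _ _ _ (comp _ _ _ (ev A bot) (sym A (ihom A bot))))
      = idm A;
  dd_iso2 : forall A,
      comp _ _ _ (lam _ _ _ (comp _ _ _ (ev A bot) (sym A (ihom A bot)))) (dd A)
      = idm _
}.

Arguments Obj : clear implicits.
Arguments Hom {s} _ _.
Arguments idm {s} _.
Arguments comp {s A B C} _ _.
Arguments tens {s} _ _.
Arguments tensm {s A A' B B'} _ _.
Arguments assoc {s} _ _ _.
Arguments assoc_inv {s} _ _ _.
Arguments sym {s} _ _.
Arguments ihom {s} _ _.
Arguments ev {s} _ _.
Arguments lam {s A B C} _.
Arguments bot {s}.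
Arguments dd {s} _.

Declare Scope cat_scope.
Delimit Scope cat_scope with cat.
Notation "g ∘ f" := (comp g f) (at level 40, left associativity) : cat_scope.
Notation "A ⊗ B" := (tens A B) (at level 34, right associativity) : cat_scope.
Notation "f ⊗m g" := (tensm f g) (at level 34, right associativity) : cat_scope.
Open Scope cat_scope.

Definition dual {C : StarAut} (A : Obj C) : Obj C := ihom A bot.
Notation "A ^⊥" := (dual A) (at level 20) : cat_scope.

Definition dualm {C : StarAut} {A B : Obj C} (f : Hom A B) : Hom (B^⊥) (A^⊥) :=
  lam (ev B bot ∘ (idm (B^⊥) ⊗m f)).

Definition dcan {C : StarAut} (A : Obj C) : Hom A ((A^⊥)^⊥) :=
  lam (ev A bot ∘ sym A (A^⊥)).

Definition par {C : StarAut} (A B : Obj C) : Obj C := ((B^⊥) ⊗ (A^⊥))^⊥.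
Notation "A ⅋ B" := (par A B) (at level 35, right associativity) : cat_scope.

Definition parm {C : StarAut} {A A' B B' : Obj C} (f : Hom A A') (g : Hom B B') :
  Hom (A ⅋ B) (A' ⅋ B') := dualm (dualm g ⊗m dualm f).

Definition parsym {C : StarAut} (A B : Obj C) : Hom (A ⅋ B) (B ⅋ A) :=
  dualm (sym (A^⊥) (B^⊥)).

Definition parassoc {C : StarAut} (A B D : Obj C) : Hom ((A ⅋ B) ⅋ D) (A ⅋ (B ⅋ D)) :=
  dualm ((idm (D^⊥) ⊗m dcan ((B^⊥) ⊗ (A^⊥)))
         ∘ assoc (D^⊥) (B^⊥) (A^⊥)
         ∘ (dd ((D^⊥) ⊗ (B^⊥)) ⊗m idm (A^⊥))).

Definition parassoc_inv {C : StarAut} (A B D : Obj C) : Hom (A ⅋ (B ⅋ D)) ((A ⅋ B) ⅋ D) :=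
  dualm ((dcan ((D^⊥) ⊗ (B^⊥)) ⊗m idm (A^⊥))
         ∘ assoc_inv (D^⊥) (B^⊥) (A^⊥)
         ∘ (idm (D^⊥) ⊗m dd ((B^⊥) ⊗ (A^⊥)))).

Definition curry {C : StarAut} {A B D : Obj C} (g : Hom (A ⊗ B^⊥) D) : Hom A (D ⅋ B) :=
  lam (ev D bot ∘ sym D (D^⊥) ∘ (g ⊗m idm (D^⊥)) ∘ assoc_inv A (B^⊥) (D^⊥)).

Definition uncurry {C : StarAut} {A B D : Obj C} (h : Hom A (D ⅋ B)) : Hom (A ⊗ B^⊥) D :=
  dd D ∘ lam (ev _ bot ∘ (h ⊗m idm ((B^⊥) ⊗ (D^⊥))) ∘ assoc A (B^⊥) (D^⊥)).

Definition evR {C : StarAut} (B D : Obj C) : Hom ((D ⅋ B) ⊗ B^⊥) D :=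
  uncurry (idm (D ⅋ B)).

Definition evL {C : StarAut} (B D : Obj C) : Hom (B^⊥ ⊗ (B ⅋ D)) D :=
  evR B D ∘ (parsym B D ⊗m idm (B^⊥)) ∘ sym (B^⊥) (B ⅋ D).

Definition curryL {C : StarAut} {A Z Y : Obj C} (g : Hom (A^⊥ ⊗ Z) Y) : Hom Z (A ⅋ Y) :=
  parsym Y A ∘ curry (g ∘ sym Z (A^⊥)).

(* Internal tensor  tau_{A,B,D,E} : (A⅋B) ⊗ (D⅋E) -> A ⅋ ((B ⊗ D) ⅋ E),
   obtained by curryfying (right in E, then left in A) the map
   evL_A ⊗ evR_E : (A^⊥ ⊗ (A⅋B)) ⊗ ((D⅋E) ⊗ E^⊥) -> B ⊗ D. *)
Definition tau {C : StarAut} (A B D E : Obj C) :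
  Hom ((A ⅋ B) ⊗ (D ⅋ E)) (A ⅋ ((B ⊗ D) ⅋ E)) :=
  curryL (curry ((evL A B ⊗m evR E D)
                 ∘ assoc_inv (A^⊥) (A ⅋ B) ((D ⅋ E) ⊗ E^⊥)
                 ∘ (idm (A^⊥) ⊗m assoc (A ⅋ B) (D ⅋ E) (E^⊥))
                 ∘ assoc (A^⊥) ((A ⅋ B) ⊗ (D ⅋ E)) (E^⊥))).

(* Main.v *)
Require Import Defs.
From Stdlib Require Import Setoid Eqdep.

Notation "A ^*" := (ihom A bot) (at level 20).
Section S.
Context {C : StarAut}.
Lemma cA {A B D E : Obj C} (f : Hom A B) (g : Hom B D) (h : Hom D E) :
  h ∘ (g ∘ f) = (h ∘ g) ∘ f.
Proof. apply comp_assoc. Qed.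
Lemma cid_l {A B : Obj C} (f : Hom A B) : idm B ∘ f = f. Proof. apply comp_idl. Qed.
Lemma cid_r {A B : Obj C} (f : Hom A B) : f ∘ idm A = f. Proof. apply comp_idr. Qed.
Lemma tid {A B : Obj C} : idm A ⊗m idm B = idm (A ⊗ B). Proof. apply tensm_id. Qed.
Lemma merge {A A' A'' B B' B'' : Obj C} (f : Hom A A') (f' : Hom A' A'')
      (g : Hom B B') (g' : Hom B' B'') :
  (f' ⊗m g') ∘ (f ⊗m g) = (f' ∘ f) ⊗m (g' ∘ g).
Proof. symmetry; apply tensm_comp. Qed.
Lemma merge' {A A' A'' B B' B'' Z : Obj C} (f : Hom A A') (f' : Hom A' A'')
      (g : Hom B B') (g' : Hom B' B'') (z : Hom (A'' ⊗ B'') Z) :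
  z ∘ (f' ⊗m g') ∘ (f ⊗m g) = z ∘ ((f' ∘ f) ⊗m (g' ∘ g)).
Proof. rewrite <- cA, merge; reflexivity. Qed.
Lemma lam_nat {A A' B D : Obj C} (h : Hom (A ⊗ B) D) (f : Hom A' A) :
  lam h ∘ f = lam (h ∘ (f ⊗m idm B)).
Proof.
  rewrite <- (lam_ev _ _ _ _ (lam h ∘ f)). f_equal.
  assert (E : (lam h ∘ f) ⊗m idm B = (lam h ⊗m idm B) ∘ (f ⊗m idm B)).
  { rewrite <- tensm_comp, cid_l. reflexivity. }
  rewrite E, cA, ev_lam. reflexivity.
Qed.
Lemma lam_nat' {A A' B D Z : Obj C} (h : Hom (A ⊗ B) D) (f : Hom A' A) (z : Hom _ Z) :
  z ∘ lam h ∘ f = z ∘ lam (h ∘ (f ⊗m idm B)).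
Proof. rewrite <- cA, lam_nat; reflexivity. Qed.
Lemma evlam {A B D B' : Obj C} (h : Hom (A ⊗ B) D) (g : Hom B' B) :
  ev B D ∘ (lam h ⊗m g) = h ∘ (idm A ⊗m g).
Proof.
  assert (E : lam h ⊗m g = (lam h ⊗m idm B) ∘ (idm A ⊗m g)).
  { rewrite <- tensm_comp, cid_l, cid_r. reflexivity. }
  rewrite E, cA, ev_lam. reflexivity.
Qed.
Lemma evlam' {A B D B' Z : Obj C} (h : Hom (A ⊗ B) D) (g : Hom B' B) (z : Hom Z _) :
  ev B D ∘ (lam h ⊗m g) ∘ z = h ∘ ((idm A ⊗m g) ∘ z).
Proof. rewrite evlam, cA; reflexivity. Qed.
Lemma lam_ext {A B D : Obj C} (f g : Hom A (ihom B D)) :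
  ev B D ∘ (f ⊗m idm B) = ev B D ∘ (g ⊗m idm B) -> f = g.
Proof. intro H. rewrite <- (lam_ev _ _ _ _ f), <- (lam_ev _ _ _ _ g), H. reflexivity. Qed.
Lemma ctx {A B D E : Obj C} (a : Hom B D) (b : Hom A B) (r : Hom A D) (z : Hom D E) :
  a ∘ b = r -> z ∘ a ∘ b = z ∘ r.
Proof. intro H; rewrite <- cA, H; reflexivity. Qed.
End S.
Tactic Notation "crw" uconstr(H) := rewrite ?cA; first [ rewrite H | rewrite (ctx _ _ _ _ H) ]; rewrite ?cA.


Section S2.
Context {C : StarAut}.



Lemma ddcan (A : Obj C) : dd A ∘ dcan A = idm A.
Proof. apply dd_iso1. Qed.
Lemma candd (A : Obj C) : dcan A ∘ dd A = idm _.
Proof. apply dd_iso2. Qed.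
Lemma ddcan' (A : Obj C) : dd A ∘ lam (ev A bot ∘ sym A (A^*)) = idm A.
Proof. apply dd_iso1. Qed.
Lemma candd' (A : Obj C) : lam (ev A bot ∘ sym A (A^*)) ∘ dd A = idm _.
Proof. apply dd_iso2. Qed.
Lemma symsym (A B : Obj C) : sym B A ∘ sym A B = idm _.
Proof. apply sym_inv. Qed.
Lemma aai (A B D : Obj C) : assoc A B D ∘ assoc_inv A B D = idm _.
Proof. apply assoc_iso2. Qed.
Lemma aia (A B D : Obj C) : assoc_inv A B D ∘ assoc A B D = idm _.
Proof. apply assoc_iso1. Qed.
Lemma symnat {A A' B B' : Obj C} (f : Hom A A') (g : Hom B B') :
  sym A' B' ∘ (f ⊗m g) = (g ⊗m f) ∘ sym A B.
Proof. apply sym_nat. Qed.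
Lemma assocnat {A A' B B' D D' : Obj C} (f : Hom A A') (g : Hom B B') (h : Hom D D') :
  assoc A' B' D' ∘ ((f ⊗m g) ⊗m h) = (f ⊗m (g ⊗m h)) ∘ assoc A B D.
Proof. apply assoc_nat. Qed.
Lemma assocnat1 {A B D D' : Obj C} (h : Hom D D') :
  assoc A B D' ∘ (idm (A ⊗ B) ⊗m h) = (idm A ⊗m (idm B ⊗m h)) ∘ assoc A B D.
Proof. rewrite <- tid. apply assoc_nat. Qed.
Lemma associnvnat {A A' B B' D D' : Obj C} (f : Hom A A') (g : Hom B B') (h : Hom D D') :
  assoc_inv A' B' D' ∘ (f ⊗m (g ⊗m h)) = ((f ⊗m g) ⊗m h) ∘ assoc_inv A B D.
Proof.
  rewrite <- (cid_r (_ ∘ _)), <- (aai A B D), cA.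
  rewrite <- (cA (assoc A B D)), <- assocnat, !cA, aia, cid_l. reflexivity.
Qed.
Lemma associnvnat1 {A A' B D : Obj C} (f : Hom A A') :
  assoc_inv A' B D ∘ (f ⊗m idm (B ⊗ D)) = ((f ⊗m idm B) ⊗m idm D) ∘ assoc_inv A B D.
Proof. rewrite <- tid. apply associnvnat. Qed.

Lemma ddR {V U W : Obj C} (g : Hom U (V^*)) (L : Hom W ((V^*)^*)) :
  ev V bot ∘ (g ⊗m (dd V ∘ L)) = ev (V^*) bot ∘ (L ⊗m g) ∘ sym U W.
Proof.
  assert (H : ev (V^*) bot = ev V bot ∘ sym _ _ ∘ (dd V ⊗m idm _)).
  { assert (E1 : ev V bot ∘ sym V (V^*) = ev (V^*) bot ∘ (dcan V ⊗m idm _)).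
    { unfold dcan, dual. rewrite ev_lam. reflexivity. }
    rewrite E1, <- cA, merge, candd, cid_l, tid, cid_r. reflexivity. }
  rewrite H, merge', cid_l. crw (symnat (dd V ∘ L) g). crw (symsym U W).
  rewrite cid_r. reflexivity.
Qed.
Lemma ddL {V U W : Obj C} (L : Hom W (((V^*)^*)^*)) (g : Hom U V) :
  ev V bot ∘ ((dd (V^*) ∘ L) ⊗m g) = ev ((V^*)^*) bot ∘ (L ⊗m (lam (ev V bot ∘ sym V (V^*)) ∘ g)).
Proof.
  assert (H : ev V bot = ev (V^*) bot ∘ (dcan V ⊗m idm _) ∘ sym _ _).
  { unfold dcan, dual. rewrite ev_lam, <- cA, symsym, cid_r. reflexivity. }
  rewrite H at 1. crw (symnat (dd (V^*) ∘ L) g). rewrite merge', cid_l, ddR.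
  crw (symsym W U). rewrite cid_r. reflexivity.
Qed.
End S2.

Section S3.
Context {C : StarAut}.
Lemma into_ext {U A : Obj C} (f g : Hom U A) :
  ev A bot ∘ sym A (A^*) ∘ (f ⊗m idm (A^*)) = ev A bot ∘ sym A (A^*) ∘ (g ⊗m idm (A^*)) -> f = g.
Proof.
  intro H.
  assert (E1 : ev A bot ∘ sym A (A^*) = ev (A^*) bot ∘ (dcan A ⊗m idm _)).
  { unfold dcan, dual. rewrite ev_lam. reflexivity. }
  rewrite E1, !merge', cid_l in H. apply lam_ext in H.
  rewrite <- (cid_l f), <- (cid_l g), <- (ddcan A), <- !cA, H. reflexivity.
Qed.
End S3.


Section S4.
Context {C : StarAut}.
Lemma ddR0 {V U : Obj C} (g : Hom U (V^*)) :
  ev V bot ∘ (g ⊗m dd V) = ev (V^*) bot ∘ (idm _ ⊗m g) ∘ sym U _.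
Proof. rewrite <- (cid_r (dd V)), ddR. reflexivity. Qed.
Lemma ddL0 {V U : Obj C} (g : Hom U V) :
  ev V bot ∘ (dd (V^*) ⊗m g) = ev ((V^*)^*) bot ∘ (idm _ ⊗m (lam (ev V bot ∘ sym V (V^*)) ∘ g)).
Proof. rewrite <- (cid_r (dd (V^*))), ddL. reflexivity. Qed.
Lemma split1 {A A' A'' B B' : Obj C} (f : Hom A' A'') (s : Hom A A') (h : Hom B B') :
  (f ∘ s) ⊗m h = (f ⊗m h) ∘ (s ⊗m idm B).
Proof. rewrite merge, cid_r. reflexivity. Qed.
Lemma split2 {A A' A'' B B' : Obj C} (f : Hom A' A'') (s : Hom A A') (h : Hom B B') :
  h ⊗m (f ∘ s) = (h ⊗m f) ∘ (idm B ⊗m s).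
Proof. rewrite merge, cid_r. reflexivity. Qed.
End S4.

Section S6.
Context {C : StarAut}.
Lemma ddRg {V V' U W : Obj C} (g : Hom V V') (φ : Hom U (V'^*)) (L : Hom W ((V^*)^*)) :
  ev V' bot ∘ (φ ⊗m (g ∘ dd V ∘ L))
  = ev (V^*) bot ∘ (L ⊗m (lam (ev V' bot ∘ (idm (V'^*) ⊗m g)) ∘ φ)) ∘ sym U W.
Proof.
  remember (lam (ev V' bot ∘ (idm (V'^*) ⊗m g))) as k eqn:Ek.
  assert (H : ev V' bot ∘ (idm (V'^*) ⊗m g) = ev V bot ∘ (k ⊗m idm V)).
  { subst k. rewrite ev_lam. reflexivity. }
  transitivity (ev V' bot ∘ (idm _ ⊗m g) ∘ (φ ⊗m (dd V ∘ L))).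
  { rewrite merge', cid_l, cA. reflexivity. }
  rewrite H, merge', cid_l, ddR. reflexivity.
Qed.
Lemma lamev (B D : Obj C) : lam (ev B D) = idm (ihom B D).
Proof. rewrite <- (lam_ev _ _ _ _ (idm (ihom B D))), tid, cid_r. reflexivity. Qed.
Lemma lam_ext_s {A A' B D : Obj C} (h : Hom (A ⊗ B) D) (s : Hom A' A) :
  lam (h ∘ (s ⊗m idm B)) = lam h ∘ s.
Proof. rewrite lam_nat. reflexivity. Qed.
End S6.

Ltac is_struct t :=
  lazymatch t with
  | assoc _ _ _ => idtac
  | assoc_inv _ _ _ => idtac
  | sym _ _ => idtac
  | idm _ => idtac
  | ?a ⊗m ?b => is_struct a; is_struct b
  | ?a ∘ ?b => is_struct a; is_struct b
  end.
Ltac not_struct t := tryif is_struct t then fail else idtac.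

Ltac rw_u H := let h := fresh "h" in pose proof H as h; unfold par, dual in h; rewrite h; clear h.
Ltac step :=
  match goal with
  | |- context [ ?h ∘ (?g ∘ ?f) ] => rw_u (cA f g h)
  | |- context [ idm _ ∘ ?f ] => rw_u (cid_l f)
  | |- context [ ?f ∘ idm _ ] => rw_u (cid_r f)
  | |- context [ idm ?A ⊗m idm ?B ] => rw_u (@tid _ A B)
  | |- context [ ?z ∘ dd ?A ∘ lam (ev ?A bot ∘ sym ?A _) ] => rw_u (ctx _ _ _ z (ddcan' A))
  | |- context [ dd ?A ∘ lam (ev ?A bot ∘ sym ?A _) ] => rw_u (ddcan' A)
  | |- context [ ?z ∘ lam (ev ?A bot ∘ sym ?A _) ∘ dd ?A ] => rw_u (ctx _ _ _ z (candd' A))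
  | |- context [ lam (ev ?A bot ∘ sym ?A _) ∘ dd ?A ] => rw_u (candd' A)
  | |- context [ ?z ∘ sym ?B ?A ∘ sym ?A ?B ] => rw_u (ctx _ _ _ z (symsym A B))
  | |- context [ sym ?B ?A ∘ sym ?A ?B ] => rw_u (symsym A B)
  | |- context [ ?z ∘ assoc ?A ?B ?D ∘ assoc_inv ?A ?B ?D ] => rw_u (ctx _ _ _ z (aai A B D))
  | |- context [ assoc ?A ?B ?D ∘ assoc_inv ?A ?B ?D ] => rw_u (aai A B D)
  | |- context [ ?z ∘ assoc_inv ?A ?B ?D ∘ assoc ?A ?B ?D ] => rw_u (ctx _ _ _ z (aia A B D))
  | |- context [ assoc_inv ?A ?B ?D ∘ assoc ?A ?B ?D ] => rw_u (aia A B D)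
  | |- context [ lam (ev ?B ?D) ] => rw_u (lamev B D)
  | |- context [ ev ?B ?D ∘ (lam ?h ⊗m ?g) ] => rw_u (evlam h g)
  | |- context [ lam (?h ∘ (?s ⊗m idm _)) ] => is_struct s; rw_u (lam_ext_s h s)
  | |- context [ ?z ∘ lam ?h ∘ ?f ] => not_struct f; rw_u (lam_nat' h f z)
  | |- context [ lam ?h ∘ ?f ] => not_struct f; rw_u (lam_nat h f)
  | |- context [ ev ?V bot ∘ (?g ⊗m (dd ?V ∘ ?L)) ] => rw_u (ddR g L)
  | |- context [ ev ?V' bot ∘ (?φ ⊗m (?g ∘ dd ?V ∘ ?L)) ] => rw_u (ddRg g φ L)
  | |- context [ ev ?V bot ∘ (?g ⊗m dd ?V) ] => rw_u (ddR0 g)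
  | |- context [ ev ?V bot ∘ ((dd _ ∘ ?L) ⊗m ?g) ] => rw_u (@ddL _ V _ _ L g)
  | |- context [ ev ?V bot ∘ (dd _ ⊗m ?g) ] => rw_u (@ddL0 _ V _ g)
  | |- context [ (?f ∘ ?s) ⊗m ?h ] => is_struct s; not_struct f; rw_u (split1 f s h)
  | |- context [ ?h ⊗m (?f ∘ ?s) ] => is_struct s; not_struct f; rw_u (split2 f s h)
  | |- context [ ?z ∘ (?f' ⊗m ?g') ∘ (?f ⊗m ?g) ] =>
      tryif is_struct (f ⊗m g) then is_struct (f' ⊗m g') else idtac;
      rw_u (ctx _ _ _ z (merge f f' g g'))
  | |- context [ (?f' ⊗m ?g') ∘ (?f ⊗m ?g) ] =>
      tryif is_struct (f ⊗m g) then is_struct (f' ⊗m g') else idtac;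
      rw_u (merge f f' g g')
  | |- context [ ?z ∘ sym _ _ ∘ (?f ⊗m ?g) ] => rw_u (ctx _ _ _ z (symnat f g))
  | |- context [ sym _ _ ∘ (?f ⊗m ?g) ] => rw_u (symnat f g)
  | |- context [ ?z ∘ assoc _ _ _ ∘ ((?f ⊗m ?g) ⊗m ?h) ] => 
      rw_u (ctx _ _ _ z (assocnat f g h))
  | |- context [ assoc _ _ _ ∘ ((?f ⊗m ?g) ⊗m ?h) ] => 
      rw_u (assocnat f g h)
  | |- context [ ?z ∘ assoc ?A ?B _ ∘ (idm _ ⊗m ?h) ] => 
      rw_u (ctx _ _ _ z (@assocnat1 _ A B _ _ h))
  | |- context [ assoc ?A ?B _ ∘ (idm _ ⊗m ?h) ] => 
      rw_u (@assocnat1 _ A B _ _ h)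
  | |- context [ ?z ∘ assoc_inv _ _ _ ∘ (?f ⊗m (?g ⊗m ?h)) ] => 
      rw_u (ctx _ _ _ z (associnvnat f g h))
  | |- context [ assoc_inv _ _ _ ∘ (?f ⊗m (?g ⊗m ?h)) ] => 
      rw_u (associnvnat f g h)
  | |- context [ ?z ∘ assoc_inv _ ?B ?D ∘ (?f ⊗m idm _) ] => 
      rw_u (ctx _ _ _ z (@associnvnat1 _ _ _ B D f))
  | |- context [ assoc_inv _ ?B ?D ∘ (?f ⊗m idm _) ] => 
      rw_u (@associnvnat1 _ _ _ B D f)
  end.
Ltac simp := repeat step.
Ltac unf := unfold tau, curryL, curry, evL, evR, uncurry, parsym, parm, parassoc,
  parassoc_inv, dualm, dcan, par, dual in *.
Section S5.
Context {C : StarAut}.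
Lemma pent {A B D E : Obj C} :
  assoc A B (D ⊗ E) ∘ assoc (A ⊗ B) D E
  = (idm A ⊗m assoc B D E) ∘ assoc A (B ⊗ D) E ∘ (assoc A B D ⊗m idm E).
Proof. rewrite pentagon, cA. reflexivity. Qed.
End S5.
Tactic Notation "crw" uconstr(H) := rewrite ?cA; first [ rewrite H | rewrite (ctx _ _ _ _ H) ]; rewrite ?cA.
Ltac peel := repeat rewrite <- cA;
  repeat match goal with |- ?a ∘ ?b = ?a ∘ ?c => apply (f_equal (fun x => a ∘ x)) end.
Section S7.
Context {C : StarAut}.
Lemma hexa {A B D : Obj C} :
  assoc B D A ∘ sym A (B ⊗ D)
  = (idm B ⊗m sym A D) ∘ assoc B A D ∘ (sym A B ⊗m idm D) ∘ assoc_inv A B D.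
Proof.
  transitivity (assoc B D A ∘ (sym A (B ⊗ D) ∘ assoc A B D) ∘ assoc_inv A B D).
  { rewrite <- !cA, aai, cid_r. reflexivity. }
  rewrite hexagon, !cA. reflexivity.
Qed.
Lemma hexb {A B D : Obj C} :
  sym A (B ⊗ D) ∘ assoc A B D
  = assoc_inv B D A ∘ (idm B ⊗m sym A D) ∘ assoc B A D ∘ (sym A B ⊗m idm D).
Proof.
  transitivity (assoc_inv B D A ∘ (assoc B D A ∘ (sym A (B ⊗ D) ∘ assoc A B D))).
  { rewrite cA, aia, cid_l. reflexivity. }
  rewrite hexagon, !cA. reflexivity.
Qed.
Lemma pent' {A B D E : Obj C} :
  assoc A B (D ⊗ E) ∘ assoc (A ⊗ B) D E ∘ (assoc_inv A B D ⊗m idm E)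
  = (idm A ⊗m assoc B D E) ∘ assoc A (B ⊗ D) E.
Proof.
  rewrite pent, <- !cA, merge, aai, cid_l, tid, cid_r. reflexivity.
Qed.
Lemma assocnatL {A A' B D : Obj C} (f : Hom A A') :
  (f ⊗m idm (B ⊗ D)) ∘ assoc A B D = assoc A' B D ∘ ((f ⊗m idm B) ⊗m idm D).
Proof. rewrite assocnat, tid. reflexivity. Qed.
Lemma pentI {A B D E : Obj C} :
  (idm A ⊗m assoc_inv B D E) ∘ assoc A B (D ⊗ E) ∘ assoc (A ⊗ B) D E
  = assoc A (B ⊗ D) E ∘ (assoc A B D ⊗m idm E).
Proof.
  rewrite <- cA, pent, !cA, merge, aia, cid_l, tid, cid_l. reflexivity.
Qed.
End S7.
Ltac dist := repeat (rewrite ?cA; match goal with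
  | |- context [ ?h ⊗m (?f ∘ ?s) ] => rewrite (split2 f s h)
  | |- context [ (?f ∘ ?s) ⊗m ?h ] => rewrite (split1 f s h)
  end); rewrite ?cA.
Section S8.
Context {C : StarAut}.
Lemma ctx3 {A B D E F : Obj C} (a : Hom D E) (b : Hom B D) (c : Hom A B) (r : Hom A E) (z : Hom E F) :
  a ∘ b ∘ c = r -> z ∘ a ∘ b ∘ c = z ∘ r.
Proof. intro H; rewrite <- H, !cA; reflexivity. Qed.
Lemma ctx4 {A B D E F G : Obj C} (a : Hom F E) (b : Hom D F) (c : Hom B D) (d : Hom A B)
  (r : Hom A E) (z : Hom E G) :
  a ∘ b ∘ c ∘ d = r -> z ∘ a ∘ b ∘ c ∘ d = z ∘ r.
Proof. intro H; rewrite <- H, !cA; reflexivity. Qed.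
Lemma ctx5 {A B D E F G H : Obj C} (a : Hom G E) (b : Hom F G) (c : Hom D F) (d : Hom B D) (e : Hom A B)
  (r : Hom A E) (z : Hom E H) :
  a ∘ b ∘ c ∘ d ∘ e = r -> z ∘ a ∘ b ∘ c ∘ d ∘ e = z ∘ r.
Proof. intro H0; rewrite <- H0, !cA; reflexivity. Qed.
Lemma PA {A B D E : Obj C} :
  assoc_inv A B (D ⊗ E) ∘ (idm A ⊗m assoc B D E) ∘ assoc A (B ⊗ D) E ∘ (assoc A B D ⊗m idm E)
  = assoc (A ⊗ B) D E.
Proof.
  transitivity (assoc_inv A B (D ⊗ E) ∘ (assoc A B (D ⊗ E) ∘ assoc (A ⊗ B) D E)).
  - rewrite pentagon, !cA. reflexivity.
  - rewrite cA, aia, cid_l. reflexivity.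
Qed.
End S8.
Tactic Notation "crw" uconstr(H) := rewrite ?cA; first [ rewrite H | rewrite (ctx _ _ _ _ H)
  | rewrite (ctx3 _ _ _ _ _ H) | rewrite (ctx4 _ _ _ _ _ _ H) | rewrite (ctx5 _ _ _ _ _ _ _ H) ]; rewrite ?cA.

Section P. Context {C : StarAut}.
Lemma symL {A B D : Obj C} :
  sym A (B ⊗ D) = assoc_inv B D A ∘ (idm B ⊗m sym A D) ∘ assoc B A D ∘ (sym A B ⊗m idm D) ∘ assoc_inv A B D.
Proof.
  rewrite <- hexb, <- cA, aai, cid_r. reflexivity.
Qed.
Lemma symR {A B D : Obj C} :
  sym (A ⊗ B) D = assoc D A B ∘ (sym A D ⊗m idm B) ∘ assoc_inv A D B ∘ (idm A ⊗m sym B D) ∘ assoc A B D.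
Proof.
  (* sym (A⊗B) D = inverse of sym D (A⊗B) *)
  transitivity (sym (A ⊗ B) D ∘ (sym D (A ⊗ B) ∘ (assoc D A B ∘ (sym A D ⊗m idm B) ∘ assoc_inv A D B ∘ (idm A ⊗m sym B D) ∘ assoc A B D))).
  2: { rewrite cA, symsym, cid_l. reflexivity. }
  f_equal. rewrite symL. simp. reflexivity.
Qed.
End P.
Ltac symexp := repeat (match goal with
  | |- context [ sym ?A (?B ⊗ ?D) ] => rewrite (@symL _ A B D)
  | |- context [ sym (?A ⊗ ?B) ?D ] => rewrite (@symR _ A B D)
  end).


Section Coh.
Context {C : StarAut}.

Inductive tr : Type := At (x : Obj C) | Tn (a b : tr).
Fixpoint It (a : tr) : Obj C := match a with At x => x | Tn a b => It a ⊗ It b end.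
Fixpoint K (a : tr) (t : Obj C) : Obj C :=
  match a with At x => x ⊗ t | Tn a b => K a (K b t) end.
Fixpoint cK (a : tr) (t : Obj C) : Hom (It a ⊗ t) (K a t) :=
  match a with
  | At x => idm _
  | Tn a b => cK a (K b t) ∘ (idm _ ⊗m cK b t) ∘ assoc _ _ _
  end.
Fixpoint dK (a : tr) (t : Obj C) : Hom (K a t) (It a ⊗ t) :=
  match a with
  | At x => idm _
  | Tn a b => assoc_inv _ _ _ ∘ (idm _ ⊗m dK b t) ∘ dK a (K b t)
  end.
Lemma dK_cK a : forall t, dK a t ∘ cK a t = idm _.
Proof.
  induction a as [x|a IHa b IHb]; intro t; simpl.
  - apply cid_l.
  - transitivity (assoc_inv (It a) (It b) t ∘ (idm _ ⊗m dK b t) ∘ (dK a (K b t) ∘ cK a (K b t))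
       ∘ (idm _ ⊗m cK b t) ∘ assoc _ _ _).
    { rewrite !cA. reflexivity. }
    rewrite IHa, cid_r, merge', IHb, cid_l, tid, cid_r, aia.
    reflexivity.
Qed.

Inductive sm : tr -> tr -> Type :=
| Sid a : sm a a
| Scomp a b d : sm b d -> sm a b -> sm a d
| Stens a a' b b' : sm a a' -> sm b b' -> sm (Tn a b) (Tn a' b')
| Sas a b d : sm (Tn (Tn a b) d) (Tn a (Tn b d))
| Sai a b d : sm (Tn a (Tn b d)) (Tn (Tn a b) d).

Fixpoint Is {a b} (s : sm a b) : Hom (It a) (It b) :=
  match s with
  | Sid a => idm (It a)
  | Scomp _ _ _ s2 s1 => Is s2 ∘ Is s1
  | Stens _ _ _ _ s1 s2 => Is s1 ⊗m Is s2
  | Sas a b d => assoc (It a) (It b) (It d)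
  | Sai a b d => assoc_inv (It a) (It b) (It d)
  end.

Definition cast {X Y Y' : Obj C} (e : Y = Y') (f : Hom X Y) : Hom X Y' :=
  eq_rect Y (Hom X) f Y' e.

Lemma cast_comp {X Y Y' W : Obj C} (e : Y = Y') (f : Hom X Y) (h : Hom W X) :
  cast e f ∘ h = cast e (f ∘ h).
Proof. destruct e. reflexivity. Qed.
Lemma cast_trans {X Y Y' Y'' : Obj C} (e : Y = Y') (e' : Y' = Y'') (f : Hom X Y) :
  cast e' (cast e f) = cast (eq_trans e e') f.
Proof. destruct e, e'. reflexivity. Qed.

Lemma key : forall a b (s : sm a b), exists e : (forall t, K a t = K b t),
  forall t, cK b t ∘ (Is s ⊗m idm t) = cast (e t) (cK a t).
Proof.
  intros a b s; induction s as [a|a b d s2 IH2 s1 IH1|a a' b b' s1 IH1 s2 IH2|a b d|a b d].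
  - exists (fun t => eq_refl). intro t. simpl. rewrite tid, cid_r. reflexivity.
  - destruct IH1 as [e1 H1], IH2 as [e2 H2].
    exists (fun t => eq_trans (e1 t) (e2 t)). intro t. simpl.
    rewrite <- (cid_l (idm t)), tensm_comp, cA, H2, cast_comp, H1, cast_trans. reflexivity.
  - destruct IH1 as [e1 H1], IH2 as [e2 H2].
    exists (fun t => eq_trans (f_equal (K a) (e2 t)) (e1 (K b' t))).
    intro t. simpl.
    transitivity (cK a' (K b' t) ∘ (Is s1 ⊗m idm _) ∘ (idm _ ⊗m (cK b' t ∘ (Is s2 ⊗m idm t))) ∘ assoc _ _ _).
    { simp. reflexivity. }
    rewrite H1, H2. clear H1 H2.
    generalize (e1 (K b' t)). generalize (e2 t). clear e1 e2.
    generalize (cK b t) as g. generalize (K b' t) as T'. intros T' g e2. destruct e2.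
    intro e. simpl. rewrite !cast_comp. rewrite eq_trans_refl_l. reflexivity.
  - exists (fun t => eq_refl). intro t. cbn [Is K cK cast eq_rect].
    change (It (Tn b d)) with (It b ⊗ It d).
    dist. crw (eq_sym (@pent _ (It a) (It b) (It d) t)).
    crw (eq_sym (assocnat (idm (It a)) (idm (It b)) (cK d t))).
    change (It (Tn a b)) with (It a ⊗ It b). rewrite tid. reflexivity.
  - exists (fun t => eq_refl). intro t. cbn [Is It K cK cast eq_rect].
    rewrite <- (@tid _ (It a) (It b)). crw (assocnat (idm (It a)) (idm (It b)) (cK d t)).
    crw (@pent _ (It a) (It b) (It d) t). simp. reflexivity.
Qed.
End Coh.

Section Coh2.
Context {C : StarAut}.
Theorem coh (a b : @tr C) (s1 s2 : sm a b) : Is s1 = Is s2.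
Proof.
  destruct (key a b s1) as [e1 H1], (key a b s2) as [e2 H2].
  specialize (H1 (unit C)). specialize (H2 (unit C)).
  rewrite (UIP _ _ _ (e2 (unit C)) (e1 (unit C))) in H2.
  rewrite <- H2 in H1. clear H2.
  assert (E : Is s1 ⊗m idm (unit C) = Is s2 ⊗m idm (unit C)).
  { rewrite <- (cid_l (Is s1 ⊗m _)), <- (cid_l (Is s2 ⊗m _)), <- (dK_cK b (unit C)), <- !cA, H1.
    reflexivity. }
  assert (E2 : Is s1 ∘ runit C _ = Is s2 ∘ runit C _).
  { rewrite <- !runit_nat, E. reflexivity. }
  rewrite <- (cid_r (Is s1)), <- (cid_r (Is s2)), <- (runit_iso2 C (It a)), !cA, E2. reflexivity.
Qed.
End Coh2.

Ltac reify_ob X :=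
  lazymatch X with
  | tens ?A ?B => let a := reify_ob A in let b := reify_ob B in constr:(Tn a b)
  | _ => constr:(At X)
  end.
Ltac reify_sm f :=
  lazymatch f with
  | idm ?X => let a := reify_ob X in constr:(Sid a)
  | ?g ∘ ?h => let sg := reify_sm g in let sh := reify_sm h in constr:(Scomp _ _ _ sg sh)
  | ?g ⊗m ?h => let sg := reify_sm g in let sh := reify_sm h in constr:(Stens _ _ _ _ sg sh)
  | assoc ?A ?B ?D => let a := reify_ob A in let b := reify_ob B in let d := reify_ob D in
      constr:(Sas a b d)
  | assoc_inv ?A ?B ?D => let a := reify_ob A in let b := reify_ob B in let d := reify_ob D in
      constr:(Sai a b d)
  end.
Ltac acoh :=
  match goal with
  | |- ?f = ?g =>
      let s1 := reify_sm f in let s2 := reify_sm g in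
      change (Is s1 = Is s2); apply coh
  end.



Section KC.
Context {C : StarAut}.

Inductive smb : @tr C -> @tr C -> Type :=
| Bid a : smb a a
| Bcomp a b d : smb b d -> smb a b -> smb a d
| Btens a a' b b' : smb a a' -> smb b b' -> smb (Tn a b) (Tn a' b')
| Bas a b d : smb (Tn (Tn a b) d) (Tn a (Tn b d))
| Bai a b d : smb (Tn a (Tn b d)) (Tn (Tn a b) d)
| Bbox x y : Hom (It x) (It y) -> smb x y.

Fixpoint Ib {a b} (s : smb a b) : Hom (It a) (It b) :=
  match s with
  | Bid a => idm (It a)
  | Bcomp _ _ _ s2 s1 => Ib s2 ∘ Ib s1
  | Btens _ _ _ _ s1 s2 => Ib s1 ⊗m Ib s2
  | Bas a b d => assoc (It a) (It b) (It d)
  | Bai a b d => assoc_inv (It a) (It b) (It d)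
  | Bbox _ _ f => f
  end.

Fixpoint PF (a : @tr C) {T1 T2 : Obj C} (g : Hom T1 T2) : Hom (K a T1) (K a T2) :=
  match a with
  | At x => idm x ⊗m g
  | Tn a b => PF a (PF b g)
  end.

Fixpoint IK {a b} (s : smb a b) (t : Obj C) : Hom (K a t) (K b t) :=
  match s with
  | Bid a => idm _
  | Bcomp _ _ _ s2 s1 => IK s2 t ∘ IK s1 t
  | Btens a a' b b' s1 s2 => IK s1 (K b' t) ∘ PF a (IK s2 t)
  | Bas a b d => idm _
  | Bai a b d => idm _
  | Bbox x y f => cK y t ∘ (f ⊗m idm t) ∘ dK x t
  end.

Lemma cK_nat (a : @tr C) : forall (T1 T2 : Obj C) (g : Hom T1 T2),
  cK a T2 ∘ (idm (It a) ⊗m g) = PF a g ∘ cK a T1.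
Proof.
  induction a as [x|a IHa b IHb]; intros T1 T2 g; simpl.
  - rewrite cid_l, cid_r. reflexivity.
  - crw (@assocnat1 _ (It a) (It b) _ _ g). crw (merge (idm (It a)) (idm (It a)) (idm (It b) ⊗m g) (cK b T2)).
    rewrite cid_l, IHb. rewrite (split2 (PF b g) (cK b T1) (idm (It a))).
    crw (IHa _ _ (PF b g)). reflexivity.
Qed.

Lemma cK_dK (a : @tr C) : forall t, cK a t ∘ dK a t = idm _.
Proof.
  induction a as [x|a IHa b IHb]; intro t; simpl.
  - apply cid_l.
  - transitivity (cK a (K b t) ∘ (idm _ ⊗m cK b t) ∘ (assoc _ _ _ ∘ assoc_inv _ _ _)
       ∘ (idm _ ⊗m dK b t) ∘ dK a (K b t)).
    { rewrite !cA. reflexivity. }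
    rewrite aai, cid_r, merge', IHb, cid_l, tid, cid_r, IHa. reflexivity.
Qed.

Lemma keyK : forall a b (s : smb a b) t, cK b t ∘ (Ib s ⊗m idm t) = IK s t ∘ cK a t.
Proof.
  intros a b s; induction s as [a|a b d s2 IH2 s1 IH1|a a' b b' s1 IH1 s2 IH2|a b d|a b d|x y f];
    intro t.
  - cbn [Ib IK]. rewrite tid, cid_l, cid_r. reflexivity.
  - cbn [Ib IK]. rewrite <- (cid_l (idm t)), tensm_comp, cA, IH2, <- cA, IH1, cA. reflexivity.
  - cbn [Ib IK cK K It].
    transitivity (cK a' (K b' t) ∘ (Ib s1 ⊗m idm _) ∘ (idm _ ⊗m (cK b' t ∘ (Ib s2 ⊗m idm t))) ∘ assoc _ _ _).
    { simp. reflexivity. }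
    rewrite IH1, IH2, (split2 (IK s2 t) (cK b t) (idm (It a))).
    crw (cK_nat a _ _ (IK s2 t)). reflexivity.
  - destruct (key _ _ (Sas a b d)) as [e H]. specialize (H t).
    rewrite (Eqdep.EqdepTheory.UIP _ _ _ (e t) eq_refl) in H. cbn [Ib IK]. rewrite cid_l. exact H.
  - destruct (key _ _ (Sai a b d)) as [e H]. specialize (H t).
    rewrite (Eqdep.EqdepTheory.UIP _ _ _ (e t) eq_refl) in H. cbn [Ib IK]. rewrite cid_l. exact H.
  - cbn [Ib IK]. rewrite <- !cA, dK_cK, cid_r. reflexivity.
Qed.
End KC.

Section KC2.
Context {C : StarAut}.
Theorem kcoh_thm (a b : @tr C) (s1 s2 : smb a b) :
  IK s1 (unit C) = IK s2 (unit C) -> Ib s1 = Ib s2.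
Proof.
  intro H0.
  assert (H1 := keyK a b s1 (unit C)). assert (H2 := keyK a b s2 (unit C)).
  rewrite H0, <- H2 in H1. clear H2.
  assert (E : Ib s1 ⊗m idm (unit C) = Ib s2 ⊗m idm (unit C)).
  { rewrite <- (cid_l (Ib s1 ⊗m _)), <- (cid_l (Ib s2 ⊗m _)), <- (dK_cK b (unit C)), <- !cA, H1.
    reflexivity. }
  assert (E2 : Ib s1 ∘ runit C _ = Ib s2 ∘ runit C _).
  { rewrite <- !runit_nat, E. reflexivity. }
  rewrite <- (cid_r (Ib s1)), <- (cid_r (Ib s2)), <- (runit_iso2 C (It a)), !cA, E2. reflexivity.
Qed.
End KC2.

Ltac reify_b f :=
  lazymatch f with
  | idm ?X => let a := reify_ob X in constr:(Bid a)
  | ?g ∘ ?h => let sg := reify_b g in let sh := reify_b h in constr:(Bcomp _ _ _ sg sh)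
  | ?g ⊗m ?h => let sg := reify_b g in let sh := reify_b h in constr:(Btens _ _ _ _ sg sh)
  | assoc ?A ?B ?D => let a := reify_ob A in let b := reify_ob B in let d := reify_ob D in
      constr:(Bas a b d)
  | assoc_inv ?A ?B ?D => let a := reify_ob A in let b := reify_ob B in let d := reify_ob D in
      constr:(Bai a b d)
  | _ => let T := type of f in
         lazymatch T with
         | Hom ?A ?B => let a := reify_ob A in let b := reify_ob B in constr:(Bbox a b f)
         end
  end.
Ltac kred :=
  match goal with
  | |- ?f = ?g =>
      let s1 := reify_b f in let s2 := reify_b g in
      change (Ib s1 = Ib s2); apply kcoh_thm; cbn [IK PF K cK dK It]
  end.

Section T. Context {C : StarAut}.
Lemma pgoal (u q z ψ p : Obj C) :
  (idm u ⊗m sym p ((q ⊗ z) ⊗ ψ)) ∘ assoc u p ((q ⊗ z) ⊗ ψ)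
  ∘ assoc (u ⊗ p) (q ⊗ z) ψ
  ∘ ((assoc (u ⊗ p) q z
     ∘ ((assoc_inv u p q ∘ (idm u ⊗m sym q p) ∘ assoc u q p) ⊗m idm z))
    ⊗m idm ψ)
  ∘ assoc_inv ((u ⊗ q) ⊗ p) z ψ ∘ assoc_inv (u ⊗ q) p (z ⊗ ψ)
  ∘ (idm (u ⊗ q) ⊗m sym (z ⊗ ψ) p) ∘ assoc (u ⊗ q) (z ⊗ ψ) p =
  assoc u ((q ⊗ z) ⊗ ψ) p
  ∘ ((idm u ⊗m assoc_inv q z ψ ∘ assoc u q (z ⊗ ψ)) ⊗m idm p).
Proof.
  symexp. kred. simp. reflexivity.
Qed.
End T.
Section T2. Context {C : StarAut}.
Lemma tailT (u q z ψ p : Obj C) :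
  (idm u ⊗m ((sym ψ (q ⊗ z) ⊗m idm p) ∘ sym p (ψ ⊗ (q ⊗ z))))
  ∘ assoc u p (ψ ⊗ (q ⊗ z))
  ∘ sym (ψ ⊗ (q ⊗ z)) (u ⊗ p)
  ∘ assoc_inv ψ (q ⊗ z) (u ⊗ p)
  ∘ (idm ψ ⊗m ((idm (q ⊗ z) ⊗m sym p u) ∘ sym (p ⊗ u) (q ⊗ z) ∘ assoc_inv p u (q ⊗ z)
        ∘ (idm p ⊗m assoc u q z) ∘ assoc p (u ⊗ q) z ∘ (sym (u ⊗ q) p ⊗m idm z)))
  ∘ sym (((u ⊗ q) ⊗ p) ⊗ z) ψ
  ∘ assoc_inv ((u ⊗ q) ⊗ p) z ψ
  ∘ assoc_inv (u ⊗ q) p (z ⊗ ψ)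
  ∘ (idm (u ⊗ q) ⊗m sym (z ⊗ ψ) p)
  ∘ assoc (u ⊗ q) (z ⊗ ψ) p
  = assoc u ((q ⊗ z) ⊗ ψ) p ∘ (((idm u ⊗m assoc_inv q z ψ) ∘ assoc u q (z ⊗ ψ)) ⊗m idm p).
Proof.
  set (I := (idm (q ⊗ z) ⊗m sym p u) ∘ sym (p ⊗ u) (q ⊗ z) ∘ assoc_inv p u (q ⊗ z)
        ∘ (idm p ⊗m assoc u q z) ∘ assoc p (u ⊗ q) z ∘ (sym (u ⊗ q) p ⊗m idm z)).
  crw (eq_sym (symnat I (idm ψ))).
  rewrite (@symR _ (q ⊗ z) (u ⊗ p) ψ). simp.
  rewrite (@symR _ (q ⊗ z) ψ (u ⊗ p)). simp. unfold I. simp.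
  symexp. kred. simp. reflexivity.
Qed.
End T2.

Section P. Context {C : StarAut}.
Lemma P4 (X Q Q' : Obj C) (g : Hom Q Q') :
  evL X Q' ∘ (idm _ ⊗m parm (idm X) g) = g ∘ evL X Q.
Proof. apply into_ext. unf. simp. reflexivity. Qed.
Lemma TAUF (A B D E : Obj C) :
  evR E (B ⊗ D) ∘ ((evL A ((B ⊗ D) ⅋ E) ∘ (idm _ ⊗m tau A B D E)) ⊗m idm _)
  = (evL A B ⊗m evR E D) ∘ assoc_inv _ _ _ ∘ (idm _ ⊗m assoc _ _ _) ∘ assoc _ _ _.
Proof. apply into_ext. unf. simp. reflexivity. Qed.
Lemma P3 (X Q N : Obj C) :
  evR N Q ∘ ((evL X (Q ⅋ N) ∘ (idm _ ⊗m parassoc X Q N)) ⊗m idm _)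
  = evL X Q ∘ (idm _ ⊗m evR N (X ⅋ Q)) ∘ assoc _ _ _.
Proof. apply into_ext. unf. simp. peel. rewrite hexa, hexb. simp. dist. peel. rewrite !cA, pent'. peel. rewrite !cA, assocnat. peel. rewrite assocnatL, !cA, pentI. reflexivity. Qed.
Lemma P2 (A B D : Obj C) :
  evR (B ⅋ D) A ∘ (parassoc A B D ⊗m dcan (D^⊥ ⊗ B^⊥))
  = evR B A ∘ (evR D (A ⅋ B) ⊗m idm _) ∘ assoc_inv _ _ _.
Proof.
  apply into_ext. unf. simp. crw pent. simp. reflexivity.
Qed.
Lemma ETA_R {U B D : Obj C} (h : Hom U (D ⅋ B)) : curry (evR B D ∘ (h ⊗m idm _)) = h.
Proof. apply lam_ext. unf. simp. reflexivity. Qed.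
Lemma ETA_L {U B D : Obj C} (f : Hom U (B ⅋ D)) : curryL (evL B D ∘ (idm _ ⊗m f)) = f.
Proof. apply lam_ext. unf. simp. rewrite merge', symsym, cid_r. reflexivity. Qed.
Definition kap (Cc D : Obj C) : Hom (D ⊗ (Cc ⊗ D)^*) (Cc^*) :=
  lam (ev (Cc ⊗ D) bot ∘ (idm _ ⊗m sym D Cc) ∘ assoc _ _ _ ∘ (sym D ((Cc ⊗ D)^*) ⊗m idm Cc)).
Lemma K1 (Cc D : Obj C) :
  ev (Cc ⊗ D) bot = ev Cc bot ∘ (kap Cc D ⊗m idm Cc) ∘ (sym _ D ⊗m idm Cc)
     ∘ assoc_inv _ _ _ ∘ (idm _ ⊗m sym Cc D).
Proof.
  unfold kap. rewrite ev_lam. simp. reflexivity.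
Qed.
Lemma TAUR (P Cc D Z : Obj C) :
  evR ((Cc ⊗ D) ⅋ Z) P ∘ (tau P Cc D Z ⊗m dcan (Z^⊥ ⊗ (Cc ⊗ D)^⊥))
  = evR Cc P ∘ (idm _ ⊗m (kap Cc D ∘ (evR Z D ⊗m idm _))) ∘ (idm _ ⊗m assoc_inv _ _ _) ∘ assoc _ _ _.
Proof. apply into_ext. unf. simp. rewrite (K1 Cc D). simp. peel. rewrite ?cA. apply tailT. Qed.
Lemma PAI (A B D : Obj C) : parassoc A B D ∘ parassoc_inv A B D = idm _.
Proof. apply lam_ext. unf. simp. reflexivity. Qed.
End P.

Ltac rhead_parm := repeat match goal with |- context [ (parm ?a ?b ∘ ?g) ∘ ?f ] => rw_u (eq_sym (cA f g (parm a b))) end.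
Ltac rhead_pa := repeat match goal with |- context [ (parassoc ?a ?b ?c ∘ ?g) ∘ ?f ] => rw_u (eq_sym (cA f g (parassoc a b c))) end.
Ltac rhead_pai := repeat match goal with |- context [ (parassoc_inv ?a ?b ?c ∘ ?g) ∘ ?f ] => rw_u (eq_sym (cA f g (parassoc_inv a b c))) end.
Ltac rhead_tau := repeat match goal with |- context [ (tau ?a ?b ?c ?d ∘ ?g) ∘ ?f ] => rw_u (eq_sym (cA f g (tau a b c d))) end.
Section M. Context {C : StarAut}.
Lemma Einj {U X M V W : Obj C} (f g : Hom U (X ⅋ (M ⅋ V)))
  (T : Hom W (V^⊥)) (T' : Hom (V^⊥) W) (HT : T ∘ T' = idm _) :
  evR V M ∘ ((evL X (M ⅋ V) ∘ (idm _ ⊗m f)) ⊗m T)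
  = evR V M ∘ ((evL X (M ⅋ V) ∘ (idm _ ⊗m g)) ⊗m T) -> f = g.
Proof.
  intro H.
  assert (H1 : evR V M ∘ ((evL X (M ⅋ V) ∘ (idm _ ⊗m f)) ⊗m idm _)
             = evR V M ∘ ((evL X (M ⅋ V) ∘ (idm _ ⊗m g)) ⊗m idm _)).
  { rewrite <- HT, <- (cid_r (evL X (M ⅋ V) ∘ (idm _ ⊗m f))),
      <- (cid_r (evL X (M ⅋ V) ∘ (idm _ ⊗m g))), !tensm_comp, !cA, H. reflexivity. }
  apply (f_equal curry) in H1. rewrite !ETA_R in H1.
  apply (f_equal curryL) in H1. rewrite !ETA_L in H1. exact H1.
Qed.

Lemma TAUF_g {A B D E G1 G2 G3 G4 : Obj C} (a : Hom G1 (A^⊥)) (p : Hom G2 (A ⅋ B))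
  (q : Hom G3 (D ⅋ E)) (e : Hom G4 (E^⊥)) :
  evR E (B ⊗ D) ∘ ((evL A ((B ⊗ D) ⅋ E) ∘ (a ⊗m (tau A B D E ∘ (p ⊗m q)))) ⊗m e)
  = ((evL A B ∘ (a ⊗m p)) ⊗m (evR E D ∘ (q ⊗m e)))
    ∘ assoc_inv _ _ _ ∘ (idm _ ⊗m assoc _ _ _) ∘ assoc _ _ _.
Proof.
  transitivity (evR E (B ⊗ D) ∘ ((evL A ((B ⊗ D) ⅋ E) ∘ (idm _ ⊗m tau A B D E)) ⊗m idm _)
     ∘ ((a ⊗m (p ⊗m q)) ⊗m e)).
  { unfold par, dual in *. simp. reflexivity. }
  unfold par, dual in *. rw_u (TAUF A B D E). simp. reflexivity.
Qed.

Lemma P2_g {A B D G1 G2 G3 : Obj C} (w : Hom G1 ((A ⅋ B) ⅋ D)) (t1 : Hom G2 (D^⊥))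
  (t2 : Hom G3 (B^⊥)) :
  evR ((D^⊥ ⊗ B^⊥)^⊥) A ∘ ((parassoc A B D ∘ w) ⊗m (dcan (D^⊥ ⊗ B^⊥) ∘ (t1 ⊗m t2)))
  = evR B A ∘ ((evR D (A ⅋ B) ∘ (w ⊗m t1)) ⊗m t2) ∘ assoc_inv _ _ _.
Proof.
  transitivity (evR (B ⅋ D) A ∘ (parassoc A B D ⊗m dcan (D^⊥ ⊗ B^⊥)) ∘ (w ⊗m (t1 ⊗m t2))).
  { unfold par, dual in *. simp. reflexivity. }
  unfold par, dual in *. rw_u (P2 A B D). simp. reflexivity.
Qed.

Lemma P4_g {X Q Q' G1 G2 : Obj C} (g : Hom Q Q') (a : Hom G1 (X^⊥)) (w : Hom G2 (X ⅋ Q)) :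
  evL X Q' ∘ (a ⊗m (parm (idm X) g ∘ w)) = g ∘ (evL X Q ∘ (a ⊗m w)).
Proof.
  transitivity (evL X Q' ∘ (idm _ ⊗m parm (idm X) g) ∘ (a ⊗m w)).
  { unfold par, dual in *. simp. reflexivity. }
  unfold par, dual in *. rw_u (P4 X Q Q' g). simp. reflexivity.
Qed.
Lemma P3_g {X Q N G1 G2 G3 : Obj C} (a : Hom G1 (X^⊥)) (w : Hom G2 ((X ⅋ Q) ⅋ N))
  (t : Hom G3 (N^⊥)) :
  evR N Q ∘ ((evL X (Q ⅋ N) ∘ (a ⊗m (parassoc X Q N ∘ w))) ⊗m t)
  = evL X Q ∘ (a ⊗m (evR N (X ⅋ Q) ∘ (w ⊗m t))) ∘ assoc _ _ _.
Proof.
  transitivity (evR N Q ∘ ((evL X (Q ⅋ N) ∘ (idm _ ⊗m parassoc X Q N)) ⊗m idm _) ∘ ((a ⊗m w) ⊗m t)).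
  { unfold par, dual in *. simp. reflexivity. }
  unfold par, dual in *. rw_u (P3 X Q N). simp. reflexivity.
Qed.
Lemma P3i_g {X Q N G1 G2 G3 : Obj C} (a : Hom G1 (X^⊥)) (m : Hom G2 (X ⅋ (Q ⅋ N)))
  (t : Hom G3 (N^⊥)) :
  evL X Q ∘ (a ⊗m (evR N (X ⅋ Q) ∘ ((parassoc_inv X Q N ∘ m) ⊗m t)))
  = evR N Q ∘ ((evL X (Q ⅋ N) ∘ (a ⊗m m)) ⊗m t) ∘ assoc_inv _ _ _.
Proof.
  transitivity (evR N Q ∘ ((evL X (Q ⅋ N) ∘ (a ⊗m (parassoc X Q N ∘ (parassoc_inv X Q N ∘ m)))) ⊗m t)
     ∘ assoc_inv _ _ _).
  - rewrite P3_g. rewrite <- !cA, aai, cid_r. reflexivity.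
  - rewrite cA, PAI, cid_l. reflexivity.
Qed.
Lemma P2i_g {A B D G1 G2 G3 : Obj C} (h : Hom G1 (A ⅋ (B ⅋ D))) (t1 : Hom G2 (D^⊥))
  (t2 : Hom G3 (B^⊥)) :
  evR B A ∘ ((evR D (A ⅋ B) ∘ ((parassoc_inv A B D ∘ h) ⊗m t1)) ⊗m t2)
  = evR ((D^⊥ ⊗ B^⊥)^⊥) A ∘ (h ⊗m (dcan (D^⊥ ⊗ B^⊥) ∘ (t1 ⊗m t2))) ∘ assoc _ _ _.
Proof.
  transitivity (evR ((D^⊥ ⊗ B^⊥)^⊥) A ∘ ((parassoc A B D ∘ (parassoc_inv A B D ∘ h)) ⊗m (dcan (D^⊥ ⊗ B^⊥) ∘ (t1 ⊗m t2))) ∘ assoc _ _ _).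
  - rewrite P2_g. rewrite <- !cA, aia, cid_r. reflexivity.
  - rewrite cA, PAI, cid_l. reflexivity.
Qed.
Lemma TAUR_g {P Cc D Z G1 G2 G3 : Obj C} (p : Hom G1 (P ⅋ Cc)) (q : Hom G2 (D ⅋ Z))
  (r : Hom G3 (Z^⊥ ⊗ (Cc ⊗ D)^⊥)) :
  evR ((Cc ⊗ D) ⅋ Z) P ∘ ((tau P Cc D Z ∘ (p ⊗m q)) ⊗m (dcan (Z^⊥ ⊗ (Cc ⊗ D)^⊥) ∘ r))
  = evR Cc P ∘ (idm _ ⊗m (kap Cc D ∘ (evR Z D ⊗m idm _))) ∘ (idm _ ⊗m assoc_inv _ _ _) ∘ assoc _ _ _
    ∘ ((p ⊗m q) ⊗m r).
Proof.
  transitivity (evR ((Cc ⊗ D) ⅋ Z) P ∘ (tau P Cc D Z ⊗m dcan (Z^⊥ ⊗ (Cc ⊗ D)^⊥)) ∘ ((p ⊗m q) ⊗m r)).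
  { unfold par, dual in *. simp. reflexivity. }
  rewrite TAUR. reflexivity.
Qed.

Lemma TAUR_g0 {P Cc D Z G1 G2 : Obj C} (p : Hom G1 (P ⅋ Cc)) (q : Hom G2 (D ⅋ Z)) :
  evR ((Cc ⊗ D) ⅋ Z) P ∘ ((tau P Cc D Z ∘ (p ⊗m q)) ⊗m (dcan (Z^⊥ ⊗ (Cc ⊗ D)^⊥)))
  = evR Cc P ∘ (idm _ ⊗m (kap Cc D ∘ (evR Z D ⊗m idm _))) ∘ (idm _ ⊗m assoc_inv _ _ _) ∘ assoc _ _ _
    ∘ ((p ⊗m q) ⊗m idm _).
Proof.
  transitivity (evR ((Cc ⊗ D) ⅋ Z) P ∘ (tau P Cc D Z ⊗m dcan (Z^⊥ ⊗ (Cc ⊗ D)^⊥)) ∘ ((p ⊗m q) ⊗m idm _)).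
  { unfold par, dual in *. simp. reflexivity. }
  rewrite TAUR. reflexivity.
Qed.

Lemma P2_g1 {A B D G2 G3 : Obj C} (t1 : Hom G2 (D^⊥)) (t2 : Hom G3 (B^⊥)) :
  evR ((D^⊥ ⊗ B^⊥)^⊥) A ∘ (parassoc A B D ⊗m (dcan (D^⊥ ⊗ B^⊥) ∘ (t1 ⊗m t2)))
  = evR B A ∘ ((evR D (A ⅋ B) ∘ (idm _ ⊗m t1)) ⊗m t2) ∘ assoc_inv _ _ _.
Proof.
  rewrite <- (cid_r (parassoc A B D)). apply P2_g.
Qed.

Theorem main (X A B Y Cc D Z : Obj C) :
  tau X A B (Y ⅋ ((Cc ⊗ D) ⅋ Z))
    ∘ (idm (X ⅋ A) ⊗m (parassoc B Y ((Cc ⊗ D) ⅋ Z) ∘ tau (B ⅋ Y) Cc D Z))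
  =
  parm (idm X) (parassoc (A ⊗ B) Y ((Cc ⊗ D) ⅋ Z))
    ∘ parassoc X ((A ⊗ B) ⅋ Y) ((Cc ⊗ D) ⅋ Z)
    ∘ tau (X ⅋ ((A ⊗ B) ⅋ Y)) Cc D Z
    ∘ ((parassoc_inv X ((A ⊗ B) ⅋ Y) Cc
          ∘ parm (idm X) (parassoc_inv (A ⊗ B) Y Cc)
          ∘ tau X A B (Y ⅋ Cc)
          ∘ (idm (X ⅋ A) ⊗m parassoc B Y Cc))
        ⊗m idm (D ⅋ Z))
    ∘ assoc_inv (X ⅋ A) ((B ⅋ Y) ⅋ Cc) (D ⅋ Z).
Proof.
  apply (Einj _ _ (dcan (((Cc ⊗ D) ⅋ Z)^⊥ ⊗ Y^⊥) ∘ (dcan (Z^⊥ ⊗ (Cc ⊗ D)^⊥) ⊗m idm (Y^⊥)))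
                  ((dd _ ⊗m idm _) ∘ dd _)).
  { unfold dcan; unfold par, dual. simp. reflexivity. }
  unfold par, dual. rw_u (@TAUF_g). simp. rw_u (@P2_g). simp. rw_u (@TAUR). simp.
  rhead_parm. rw_u (@P4_g). simp. rhead_pa. rw_u (@P2_g). simp.
  rhead_pa. rw_u (@P3_g). simp. rhead_tau. rw_u (@TAUR_g0). simp.
  rhead_pai. rw_u (@P3i_g). simp. rhead_parm. rw_u (@P4_g). simp.
  rhead_pai. rw_u (@P2i_g). simp. rhead_tau. rw_u (@TAUF_g). simp. rw_u (@P2_g1). simp. peel. acoh.
Qed.
End M.

Theorem proposition2p14 (C : StarAut) (X A B Y Cc D Z : Obj C) :
  tau X A B (Y ⅋ ((Cc ⊗ D) ⅋ Z))
    ∘ (idm (X ⅋ A) ⊗m (parassoc B Y ((Cc ⊗ D) ⅋ Z) ∘ tau (B ⅋ Y) Cc D Z))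
  =
  parm (idm X) (parassoc (A ⊗ B) Y ((Cc ⊗ D) ⅋ Z))
    ∘ parassoc X ((A ⊗ B) ⅋ Y) ((Cc ⊗ D) ⅋ Z)
    ∘ tau (X ⅋ ((A ⊗ B) ⅋ Y)) Cc D Z
    ∘ ((parassoc_inv X ((A ⊗ B) ⅋ Y) Cc
          ∘ parm (idm X) (parassoc_inv (A ⊗ B) Y Cc)
          ∘ tau X A B (Y ⅋ Cc)
          ∘ (idm (X ⅋ A) ⊗m parassoc B Y Cc))
        ⊗m idm (D ⅋ Z))
    ∘ assoc_inv (X ⅋ A) ((B ⅋ Y) ⅋ Cc) (D ⅋ Z).
Proof.
  exact (@main C X A B Y Cc D Z).
Qed.
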